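(* Let $S$ be a square-free semigroup, $D$ a division ring, $(\alpha,\xi)\in Z^2(S,D^* )$ a normal 2-cocycle and $R=D^{\alpha}_{\xi}S$. Let $\Phi:\mathrm{Out}\,R\to\mathrm{Aut}(S)$ be the homomorphism described below. Then $\mathrm{Im}\,\Phi=\mathrm{Stab}_{[\alpha,\xi]}(\mathrm{Aut}\,S)=\{\phi\in\mathrm{Aut}(S):[\alpha,\xi]=[\alpha^{\phi},\xi^{\phi}]\}$.
   Context: $D$ is a division ring, $D^*$ its group of units, $\mathrm{Aut}(D)$ its ring automorphism group, $\rho_d(x)=dxd^{-1}$. A square-free semigroup is a semigroup $S$ (product $s\cdot t$) with zero $\theta$ and a finite set $E\subseteq S$ of nonzero pairwise orthogonal idempotents with $S=\bigcup_{e,f\in E}e\cdot S\cdot f$ and $|e\cdot S\cdot f\setminus\{\theta\}|\le 1$; $S^*=S\setminus\{\theta\}$, each $s\in S^*$ equals $e\cdot s\cdot f$ for unique $e,f\in E$; $\mathrm{Aut}(S)$ is the semigroup automorphism group. $S^{<0>}=E$, $S^{<n>}=\{(s_1,\dots,s_n)\in S^n:s_1\cdots s_n\ne\theta\}$, $F^n(S,G)$ the group of functions $S^{<n>}\to G$; $\alpha_s=\alpha(s)$, $\mu_e=\mu(e)$. A 2-cocycle is $(\alpha,\xi)\in F^1(S,\mathrm{Aut}(D))\times F^2(S,D^* )$ with $\alpha_s(\xi(t,u))\xi(s,t\cdot u)=\xi(s,t)\xi(s\cdot t,u)$ on $S^{<3>}$ and $\alpha_s\circ\alpha_t=\rho_{\xi(s,t)}\circ\alpha_{s\cdot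 t}$ on $S^{<2>}$; $Z^2(S,D^* )$ is their set; normal means $\alpha_e=1_D$, $\xi(e,e)=1$ for $e\in E$. $F^0(S,\mathrm{Aut}(D))\ltimes F^1(S,D^* )$ acts on $Z^2(S,D^* )$ by $(\mu,\eta)*(\alpha,\xi)=(\beta,\zeta)$ where for $s=e\cdot s\cdot f$, $t=f\cdot t\cdot g$, $s\cdot t\ne\theta$: $\mu_e\circ\beta_s\circ\mu_f^{-1}=\rho_{\eta(s)}\circ\alpha_s$ and $\mu_e(\zeta(s,t))=\eta(s)\alpha_s(\eta(t))\xi(s,t)\eta(s\cdot t)^{-1}$; $[\alpha,\xi]$ denotes the orbit (thin 2-cohomology class). For $\phi\in\mathrm{Aut}(S)$, $\alpha^{\phi}_s=\alpha_{\phi(s)}$, $\xi^{\phi}(s,t)=\xi(\phi(s),\phi(t))$. $D^{\alpha}_{\xi}S$ is the left $D$-vector space with basis $S^*$, multiplication extended by distributivity from $(d_1s)(d_2t)=d_1\alpha_s(d_2)\xi(s,t)(s\cdot t)$ if $s\cdot t\ne\theta$, $0$ otherwise. $\mathrm{Out}\,R=\mathrm{Aut}\,R/\mathrm{Inn}\,R$. The map $\Phi$: let $\mathrm{Aut}_0R=\{\gamma\in\mathrm{Aut}\,R:\gamma(E)=E\}$. Every coset $(\mathrm{Inn}\,R)\gamma$ contains some $\gamma_0\in\mathrm{Aut}_0R$, and every $\gamma_0\in\mathrm{Aut}_0R$ has the form $\gamma_0(ds)=\mu_e(d)\eta(s)\phi(s)$ ($d\in D$, $s=e\cdot s\in S^*$)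 for some $\mu\in F^0(S,\mathrm{Aut}(D))$, $\eta\in F^1(S,D^* )$, $\phi\in\mathrm{Aut}(S)$, with $\phi$ depending only on the coset; $\Phi((\mathrm{Inn}\,R)\gamma_0)=\phi$ is a group homomorphism. *)

(* Defs.v *)
From HB Require Import structures.
From mathcomp Require Import all_boot all_order all_algebra.
Set Implicit Arguments. Unset Strict Implicit. Unset Printing Implicit Defensive.
Import GRing.Theory.
Local Open Scope ring_scope.

Section CrossedSemigroupRing.
Variables (D : unitRingType) (S : finType) (mul : S -> S -> S) (theta : S)
          (E : {set S}).

Definition square_free : Prop :=
  associative mul /\
  (forall s, mul theta s = theta /\ mul s theta = theta) /\
  (forall e, e \in E -> e != theta /\ mul e e = e) /\
  (forall e f, e \in E -> f \in E -> e != f -> mul e f = theta) /\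
  (forall s, exists e f x, [/\ e \in E, f \in E & s = mul (mul e x) f]) /\
  (forall e f x y, e \in E -> f \in E ->
      mul (mul e x) f != theta -> mul (mul e y) f != theta ->
      mul (mul e x) f = mul (mul e y) f).

Definition isAutS (phi : S -> S) : Prop :=
  bijective phi /\ forall s t, phi (mul s t) = mul (phi s) (phi t).

Definition isAutD (a : D -> D) : Prop :=
  (forall x y, a (x + y) = a x + a y) /\ (forall x y, a (x * y) = a x * a y) /\
  a 1 = 1 /\ bijective a.

Definition rho (d : D) (x : D) : D := d * x * d^-1.

(* (alpha, xi) in Z^2(S, D^* ) ; functions are total, constrained on S^<n> *)
Definition is_cocycle (alpha : S -> D -> D) (xi : S -> S -> D) : Prop :=
  (forall s, s != theta -> isAutD (alpha s)) /\
  (forall s t, mul s t != theta -> xi s t \is a GRing.unit) /\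
  (forall s t u, mul (mul s t) u != theta ->
      alpha s (xi t u) * xi s (mul t u) = xi s t * xi (mul s t) u) /\
  (forall s t, mul s t != theta -> forall x,
      alpha s (alpha t x) = rho (xi s t) (alpha (mul s t) x)).

Definition is_normal (alpha : S -> D -> D) (xi : S -> S -> D) : Prop :=
  forall e, e \in E -> (forall x, alpha e x = x) /\ xi e e = 1.

Definition isF0 (mu : S -> D -> D) : Prop := forall e, e \in E -> isAutD (mu e).
Definition isF1 (eta : S -> D) : Prop :=
  forall s, s != theta -> eta s \is a GRing.unit.

Definition act_rel (mu : S -> D -> D) (eta : S -> D)
    (alpha : S -> D -> D) (xi : S -> S -> D)
    (beta : S -> D -> D) (zeta : S -> S -> D) : Prop :=
  (forall s e f, e \in E -> f \in E -> s != theta -> s = mul (mul e s) f ->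
     forall y, mu e (beta s y) = rho (eta s) (alpha s (mu f y))) /\
  (forall s t e f g, e \in E -> f \in E -> g \in E ->
     s = mul (mul e s) f -> t = mul (mul f t) g -> mul s t != theta ->
     mu e (zeta s t) = eta s * alpha s (eta t) * xi s t * (eta (mul s t))^-1).

Definition same_class (alpha : S -> D -> D) (xi : S -> S -> D) (phi : S -> S)
  : Prop :=
  exists mu eta, [/\ isF0 mu, isF1 eta &
    act_rel mu eta alpha xi (fun s => alpha (phi s))
                            (fun s t => xi (phi s) (phi t))].

Definition Stab (alpha : S -> D -> D) (xi : S -> S -> D) (phi : S -> S) : Prop :=
  isAutS phi /\ same_class alpha xi phi.

(* The ring R = D^alpha_xi S: elements are functions S -> D vanishing at theta
   (coordinates in the basis S^* ). *)
Section Ring.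
Variables (alpha : S -> D -> D) (xi : S -> S -> D).

Definition inR (x : {ffun S -> D}) : bool := x theta == 0.
Definition addR (x y : {ffun S -> D}) : {ffun S -> D} := [ffun u => x u + y u].
Definition mulR (x y : {ffun S -> D}) : {ffun S -> D} :=
  [ffun u => if u == theta then 0 else
     \sum_(s : S) \sum_(t : S)
       (if [&& s != theta, t != theta & mul s t == u]
        then x s * alpha s (y t) * xi s t else 0)].
Definition bvec (d : D) (s : S) : {ffun S -> D} :=
  [ffun u => if u == s then d else 0].

Definition isRingAut (g : {ffun S -> D} -> {ffun S -> D}) : Prop :=
  (forall x, inR x -> inR (g x)) /\
  (forall x y, inR x -> inR y -> g (addR x y) = addR (g x) (g y)) /\
  (forall x y, inR x -> inR y -> g (mulR x y) = mulR (g x) (g y)) /\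
  (forall x y, inR x -> inR y -> g x = g y -> x = y) /\
  (forall y, inR y -> exists x, inR x /\ g x = y).

Definition isOneR (w : {ffun S -> D}) : Prop :=
  inR w /\ forall x, inR x -> mulR w x = x /\ mulR x w = x.

Definition isInner (i : {ffun S -> D} -> {ffun S -> D}) : Prop :=
  exists u v, [/\ inR u, inR v, isOneR (mulR u v), isOneR (mulR v u) &
    forall x, inR x -> i x = mulR (mulR u x) v].

Definition inAut0 (g : {ffun S -> D} -> {ffun S -> D}) : Prop :=
  isRingAut g /\
  (forall e, e \in E -> exists f, f \in E /\ g (bvec 1 e) = bvec 1 f) /\
  (forall f, f \in E -> exists e, e \in E /\ g (bvec 1 e) = bvec 1 f).

(* phi is the image under Phi of the class (Inn R) gamma of some automorphism
   gamma: the coset contains gamma0 in Aut_0 R with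
   gamma0(d s) = mu_e(d) eta(s) phi(s). *)
Definition ImPhi (phi : S -> S) : Prop :=
  exists gamma, isRingAut gamma /\
  exists gamma0, [/\ inAut0 gamma0,
    (exists i, isInner i /\ forall x, inR x -> gamma0 x = i (gamma x)) &
    exists mu eta, [/\ isF0 mu, isF1 eta, isAutS phi &
      forall d s e, s != theta -> e \in E -> s = mul e s ->
        gamma0 (bvec d s) = bvec (mu e d * eta s) (phi s)]].
End Ring.
End CrossedSemigroupRing.

(* Main.v *)
Require Import Defs.
From mathcomp Require Import all_boot all_order all_algebra.
From Stdlib Require Import ClassicalEpsilon.
Set Implicit Arguments. Unset Strict Implicit. Unset Printing Implicit Defensive.
Import GRing.Theory.

Section Semi.
Variables (S : finType) (mul : S -> S -> S) (theta : S) (E : {set S}).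
Hypothesis hS : square_free mul theta E.
Implicit Types (s t u e f : S).

Lemma mulSA : associative mul. Proof. by case: hS. Qed.
Lemma m0s s : mul theta s = theta. Proof. by case: hS => _ [h _]; case: (h s). Qed.
Lemma ms0 s : mul s theta = theta. Proof. by case: hS => _ [h _]; case: (h s). Qed.
Lemma E_nz e : e \in E -> e != theta. Proof. by case: hS => _ [_ [h _]] /h []. Qed.
Lemma E_idem e : e \in E -> mul e e = e. Proof. by case: hS => _ [_ [h _]] /h []. Qed.
Lemma E_orth e f : e \in E -> f \in E -> e != f -> mul e f = theta.
Proof. by case: hS => _ [_ [_ [h _]]]; apply: h. Qed.
Lemma E_uniq e f x y : e \in E -> f \in E ->
      mul (mul e x) f != theta -> mul (mul e y) f != theta ->
      mul (mul e x) f = mul (mul e y) f.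
Proof. by case: hS => _ [_ [_ [_ [_ h]]]]; apply: h. Qed.

Lemma left_ex s : exists2 e, e \in E & mul e s = s.
Proof.
case: hS => _ [_ [_ [_ [h _]]]]; have [e [f [x [eE fE ->]]]] := h s.
by exists e => //; rewrite !mulSA E_idem.
Qed.
Lemma right_ex s : exists2 f, f \in E & mul s f = s.
Proof.
case: hS => _ [_ [_ [_ [h _]]]]; have [e [f [x [eE fE ->]]]] := h s.
by exists f => //; rewrite -!mulSA E_idem.
Qed.

Lemma left_nz e s : e \in E -> mul e s != theta -> mul e s = s.
Proof.
move=> eE; have [e0 e0E <-] := left_ex s; rewrite !mulSA.
case: (eqVneq e e0) => [-> |ne]; first by rewrite E_idem.
by rewrite (E_orth eE e0E ne) m0s eqxx.
Qed.
Lemma right_nz f s : f \in E -> mul s f != theta -> mul s f = s.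
Proof.
move=> fE; have [f0 f0E <-] := right_ex s; rewrite -!mulSA.
case: (eqVneq f0 f) => [-> |ne]; first by rewrite E_idem.
by rewrite (E_orth f0E fE ne) ms0 eqxx.
Qed.

Definition el s := odflt theta [pick e in E | mul e s == s].
Definition er s := odflt theta [pick f in E | mul s f == s].

Lemma elP s : el s \in E /\ mul (el s) s = s.
Proof.
rewrite /el; case: pickP => [e /andP [eE /eqP h] | h] //=.
have [e eE es] := left_ex s; have := h e; by rewrite eE es eqxx.
Qed.
Lemma erP s : er s \in E /\ mul s (er s) = s.
Proof.
rewrite /er; case: pickP => [e /andP [eE /eqP h] | h] //=.
have [e eE es] := right_ex s; have := h e; by rewrite eE es eqxx.
Qed.
Lemma elE s : el s \in E. Proof. by case: (elP s). Qed.
Lemma erE s : er s \in E. Proof. by case: (erP s). Qed.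
Lemma el_mul s : mul (el s) s = s. Proof. by case: (elP s). Qed.
Lemma er_mul s : mul s (er s) = s. Proof. by case: (erP s). Qed.

Lemma el_uniq e s : s != theta -> e \in E -> mul e s = s -> e = el s.
Proof.
move=> ns eE es; case: (eqVneq e (el s)) => // ne.
have : s = theta by rewrite -{1}es -{1}(el_mul s) mulSA (E_orth eE (elE s) ne) m0s.
by move=> s0; rewrite s0 eqxx in ns.
Qed.
Lemma er_uniq f s : s != theta -> f \in E -> mul s f = s -> f = er s.
Proof.
move=> ns fE sf; case: (eqVneq f (er s)) => // ne.
have : s = theta by rewrite -{1}sf -{1}(er_mul s) -mulSA (E_orth (erE s) fE) 1?eq_sym // ms0.
by move=> s0; rewrite s0 eqxx in ns.
Qed.

Lemma nz_l s t : mul s t != theta -> s != theta.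
Proof. by apply: contra => /eqP ->; rewrite m0s. Qed.
Lemma nz_r s t : mul s t != theta -> t != theta.
Proof. by apply: contra => /eqP ->; rewrite ms0. Qed.

Lemma er_el s t : mul s t != theta -> er s = el t.
Proof.
move=> h; case: (eqVneq (er s) (el t)) => // ne.
move: h; rewrite -(er_mul s) -(el_mul t) -mulSA (mulSA (er s)) (E_orth (erE s) (elE t) ne).
by rewrite m0s ms0 eqxx.
Qed.
Lemma el_mulst s t : mul s t != theta -> el (mul s t) = el s.
Proof. by move=> h; apply/esym/el_uniq; rewrite ?elE // mulSA el_mul. Qed.
Lemma er_mulst s t : mul s t != theta -> er (mul s t) = er t.
Proof. by move=> h; apply/esym/er_uniq; rewrite ?erE // -mulSA er_mul. Qed.
Lemma el_E e : e \in E -> el e = e.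
Proof. by move=> eE; apply/esym/el_uniq; rewrite ?E_idem ?E_nz. Qed.
Lemma er_E e : e \in E -> er e = e.
Proof. by move=> eE; apply/esym/er_uniq; rewrite ?E_idem ?E_nz. Qed.

Lemma el_of e f s : s != theta -> e \in E -> f \in E -> s = mul (mul e s) f ->
  e = el s /\ f = er s.
Proof.
move=> ns eE fE h.
have es : mul e s != theta by apply: contra ns => /eqP e0; rewrite h e0 m0s.
have es' := left_nz eE es.
split; first by apply: el_uniq.
by apply: er_uniq => //; rewrite {2}h es'.
Qed.

Lemma idem_E p : p != theta -> mul p p = p -> p \in E.
Proof.
move=> np pp.
have ef : er p = el p by apply: er_el; rewrite pp.
have eE : el p \in E by apply: elE.
have pe : p = mul (mul (el p) p) (el p) by rewrite el_mul -ef er_mul.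
have ee : el p = mul (mul (el p) (el p)) (el p) by rewrite !E_idem.
have := E_uniq (x:=p) (y:=el p) eE eE; rewrite -pe -ee.
by move/(_ np (E_nz eE)) => ->.
Qed.

Variable phi : S -> S.
Hypothesis hphi : isAutS mul phi.

Lemma phi_mul s t : phi (mul s t) = mul (phi s) (phi t). Proof. by case: hphi. Qed.
Lemma phi_inj : injective phi. Proof. by case: hphi => [[g h1 _] _]; apply: can_inj h1. Qed.
Lemma phi0 : phi theta = theta.
Proof.
case: hphi => [[g h1 h2] hm].
have rz y : mul y (phi theta) = phi theta by rewrite -(h2 y) -hm ms0.
by rewrite -(rz theta) m0s.
Qed.
Lemma phi_nz s : (phi s != theta) = (s != theta).
Proof.
by apply/idP/idP; apply: contra => /eqP h; rewrite ?h ?phi0 //; rewrite -phi0 in h; rewrite (phi_inj h).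
Qed.
Lemma phi_E e : e \in E -> phi e \in E.
Proof.
move=> eE; apply: idem_E; first by rewrite phi_nz E_nz.
by rewrite -phi_mul E_idem.
Qed.
Lemma phi_el s : s != theta -> el (phi s) = phi (el s).
Proof.
move=> ns; apply/esym/el_uniq; rewrite ?phi_nz ?phi_E ?elE //.
by rewrite -phi_mul el_mul.
Qed.
Lemma phi_er s : s != theta -> er (phi s) = phi (er s).
Proof.
move=> ns; apply/esym/er_uniq; rewrite ?phi_nz ?phi_E ?erE //.
by rewrite -phi_mul er_mul.
Qed.
End Semi.

Local Open Scope ring_scope.

Section Aut.
Variable (D : unitRingType).
Hypothesis hD : forall x : D, x != 0 -> x \is a GRing.unit.
Implicit Types (a : D -> D) (x y : D).

Definition dfinv (a : D -> D) : D -> D :=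
  epsilon (inhabits id) (fun g => cancel a g /\ cancel g a).

Lemma dfinvP a : isAutD a -> cancel a (dfinv a) /\ cancel (dfinv a) a.
Proof.
move=> [_ [_ [_ [g ag ga]]]]; apply: (epsilon_spec (inhabits id) (fun g => cancel a g /\ cancel g a)).
by exists g.
Qed.

Lemma aut_inj a : isAutD a -> injective a.
Proof. by move=> /dfinvP [h _]; apply: can_inj h. Qed.

Lemma aut_add a : isAutD a -> forall x y, a (x + y) = a x + a y.
Proof. by case. Qed.
Lemma aut_mul a : isAutD a -> forall x y, a (x * y) = a x * a y.
Proof. by case=> _ []. Qed.
Lemma aut_1 a : isAutD a -> a 1 = 1.
Proof. by case=> _ [_ []]. Qed.
Lemma aut_0 a : isAutD a -> a 0 = 0.
Proof.
move=> h; have := aut_add h 0 0; rewrite addr0 => /eqP.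
by rewrite -subr_eq subrr eq_sym => /eqP.
Qed.
Lemma aut_neq0 a x : isAutD a -> x != 0 -> a x != 0.
Proof.
move=> h nx; apply/eqP => ax; move/eqP: nx; apply.
by apply: (aut_inj h); rewrite ax aut_0.
Qed.
Lemma aut_unit a x : isAutD a -> x \is a GRing.unit -> a x \is a GRing.unit.
Proof.
move=> h u; apply: hD; apply: aut_neq0 => //.
by apply/eqP => x0; move: u; rewrite x0 unitr0.
Qed.
Lemma aut_inv a x : isAutD a -> x \is a GRing.unit -> a x^-1 = (a x)^-1.
Proof.
move=> h u; have ua := aut_unit h u.
apply: (mulrI ua); rewrite -aut_mul // !divrr //; exact: aut_1.
Qed.

Lemma dfinv_aut a : isAutD a -> isAutD (dfinv a).
Proof.
move=> h; have [c1 c2] := dfinvP h; have ia := aut_inj h.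
split; [|split; [|split]].
- by move=> x y; apply: ia; rewrite (aut_add h) !c2.
- by move=> x y; apply: ia; rewrite (aut_mul h) !c2.
- by apply: ia; rewrite c2 (aut_1 h).
- by exists a.
Qed.
End Aut.

Section RingR.
Variable (D : unitRingType).
Hypothesis hD : forall x : D, x != 0 -> x \is a GRing.unit.
Variables (S : finType) (mul : S -> S -> S) (theta : S) (E : {set S}).
Hypothesis hS : square_free mul theta E.
Variables (alpha : S -> D -> D) (xi : S -> S -> D).
Hypothesis hc : is_cocycle mul theta alpha xi.
Hypothesis hn : is_normal E alpha xi.
Implicit Types (s t u e f : S) (a b d : D).

Lemma alpha_aut s : s != theta -> isAutD (alpha s). Proof. by case: hc => h _; apply: h. Qed.
Lemma xi_unit s t : mul s t != theta -> xi s t \is a GRing.unit.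
Proof. by case: hc => _ [h _]; apply: h. Qed.
Lemma coc3 s t u : mul (mul s t) u != theta ->
      alpha s (xi t u) * xi s (mul t u) = xi s t * xi (mul s t) u.
Proof. by case: hc => _ [_ [h _]]; apply: h. Qed.
Lemma coc4 s t : mul s t != theta -> forall x,
      alpha s (alpha t x) = rho (xi s t) (alpha (mul s t) x).
Proof. by case: hc => _ [_ [_ h]]; apply: h. Qed.
Lemma alpha_E e x : e \in E -> alpha e x = x. Proof. by move=> /hn [h _]. Qed.
Lemma xi_E e : e \in E -> xi e e = 1. Proof. by move=> /hn [_ h]. Qed.

Lemma xi_el s : s != theta -> xi (el mul theta E s) s = 1.
Proof.
move=> ns; set e := el mul theta E s.
have eE : e \in E by apply: (elE hS).
have es : mul e s = s by apply: (el_mul hS).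
have h3 : mul (mul e e) s != theta by rewrite (E_idem hS) // es.
have := coc3 h3; rewrite alpha_E // es xi_E // (E_idem hS) // mul1r.
have u : xi e s \is a GRing.unit by apply: xi_unit; rewrite es.
by rewrite -{3}(mulr1 (xi e s)) => /(mulrI u).
Qed.

Lemma xi_er s : s != theta -> xi s (er mul theta E s) = 1.
Proof.
move=> ns; set f := er mul theta E s.
have fE : f \in E by apply: (erE hS).
have sf : mul s f = s by apply: (er_mul hS).
have h3 : mul (mul s f) f != theta by rewrite !sf.
have := coc3 h3; rewrite xi_E // (E_idem hS) // sf (aut_1 (alpha_aut ns)) mul1r.
have u : xi s f \is a GRing.unit by apply: xi_unit; rewrite sf.
by rewrite -{1}(mulr1 (xi s f)) => /(mulrI u).
Qed.

Lemma sum2_single (F : S -> S -> D) s0 t0 :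
  (forall s t, (s, t) != (s0, t0) -> F s t = 0) ->
  \sum_s \sum_t F s t = F s0 t0.
Proof.
move=> h; rewrite (bigD1 s0) //=.
rewrite [X in _ + X](_ : _ = 0) ?addr0; last first.
  apply: big1 => s ns; apply: big1 => t _; apply: h.
  by rewrite xpair_eqE (negbTE ns).
rewrite (bigD1 t0) //= [X in _ + X](_ : _ = 0) ?addr0 //.
apply: big1 => t nt; apply: h.
by rewrite xpair_eqE (negbTE nt) andbF.
Qed.

Lemma bvecE d s u : bvec d s u = if u == s then d else 0.
Proof. by rewrite /bvec ffunE. Qed.

Lemma inR_bvec d s : s != theta -> inR theta (bvec d s).
Proof. by move=> ns; rewrite /inR bvecE (eq_sym theta) (negbTE ns). Qed.

Lemma mulR_bvec a b s t : mul s t != theta ->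
  mulR mul theta alpha xi (bvec a s) (bvec b t) = bvec (a * alpha s b * xi s t) (mul s t).
Proof.
move=> nst; have ns := nz_l hS nst; have nt := nz_r hS nst.
apply/ffunP => u; rewrite /mulR !ffunE.
case: (eqVneq u theta) => [-> | nu].
  by rewrite eq_sym (negbTE nst).
rewrite (sum2_single (s0:=s) (t0:=t)) => [|s' t' ne]; last first.
  rewrite !bvecE; case: (eqVneq s' s) => [es|]; last by rewrite !mul0r if_same.
  case: (eqVneq t' t) => [et|]; first by move: ne; rewrite es et eqxx.
  by rewrite es (aut_0 (alpha_aut ns)) mulr0 mul0r if_same.
by rewrite ns nt /= !bvecE !eqxx eq_sym.
Qed.

Definition oneR : {ffun S -> D} := [ffun u => if u \in E then 1 else 0].

Lemma inR_one : inR theta oneR.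
Proof.
rewrite /inR ffunE; case: ifP => // tE.
by have := E_nz hS tE; rewrite eqxx.
Qed.

Lemma mulR_one_l (x : {ffun S -> D}) : inR theta x -> mulR mul theta alpha xi oneR x = x.
Proof.
move=> xR; apply/ffunP => u; rewrite /mulR !ffunE.
case: (eqVneq u theta) => [-> | nu]; first by move: xR => /eqP ->.
set e := el mul theta E u.
rewrite (sum2_single (s0:=e) (t0:=u)) => [|s t ne]; last first.
  case: (boolP [&& _, _ & _]) => // /and3P [ns nt /eqP st].
  rewrite ffunE; case: ifP => sE; last by rewrite !mul0r.
  have stn : mul s t != theta by rewrite st.
  have ts : mul s t = t := left_nz hS sE stn.
  have tu : t = u by rewrite -ts.
  have su : s = e by apply: (el_uniq hS) => //; rewrite -st (mulSA hS) (E_idem hS).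
  by move: ne; rewrite su tu eqxx.
have eE : e \in E by apply: (elE hS).
rewrite ffunE eE (E_nz hS eE) nu (el_mul hS) eqxx /= mul1r alpha_E // xi_el //.
by rewrite mulr1.
Qed.

Lemma mulR_one_r (x : {ffun S -> D}) : inR theta x -> mulR mul theta alpha xi x oneR = x.
Proof.
move=> xR; apply/ffunP => u; rewrite /mulR !ffunE.
case: (eqVneq u theta) => [-> | nu]; first by move: xR => /eqP ->.
set f := er mul theta E u.
rewrite (sum2_single (s0:=u) (t0:=f)) => [|s t ne]; last first.
  case: (boolP [&& _, _ & _]) => // /and3P [ns nt /eqP st].
  rewrite ffunE; case: ifP => tE; last by rewrite (aut_0 (alpha_aut ns)) mulr0 mul0r.
  have stn : mul s t != theta by rewrite st.
  have ts : mul s t = s := right_nz hS tE stn.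
  have su : s = u by rewrite -ts.
  have tf : t = f by apply: (er_uniq hS) => //; rewrite -st -(mulSA hS) (E_idem hS).
  by move: ne; rewrite su tf eqxx.
have fE : f \in E by apply: (erE hS).
rewrite ffunE fE (E_nz hS fE) nu (er_mul hS) eqxx /= (aut_1 (alpha_aut nu)) xi_er //.
by rewrite !mulr1.
Qed.

Lemma isOne_one : isOneR mul theta alpha xi oneR.
Proof. by split; [exact: inR_one | move=> x xR; rewrite mulR_one_l ?mulR_one_r]. Qed.

Lemma isInner_id : isInner mul theta alpha xi id.
Proof.
exists oneR, oneR; split; rewrite ?mulR_one_l ?inR_one //; try exact: isOne_one.
by move=> x xR; rewrite mulR_one_l ?mulR_one_r.
Qed.
End RingR.

Section Dir1.
Variable (D : unitRingType).
Hypothesis hD : forall x : D, x != 0 -> x \is a GRing.unit.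
Variables (S : finType) (mul : S -> S -> S) (theta : S) (E : {set S}).
Hypothesis hS : square_free mul theta E.
Variables (alpha : S -> D -> D) (xi : S -> S -> D).
Hypothesis hc : is_cocycle mul theta alpha xi.
Hypothesis hn : is_normal E alpha xi.
Variable phi : S -> S.
Hypothesis hphi : isAutS mul phi.
Variables (gamma0 : {ffun S -> D} -> {ffun S -> D}) (mu : S -> D -> D) (eta : S -> D).
Hypothesis hring : isRingAut mul theta alpha xi gamma0.
Hypothesis hmu : isF0 E mu.
Hypothesis heta : isF1 theta eta.
Hypothesis hform : forall d s e, s != theta -> e \in E -> s = mul e s ->
        gamma0 (bvec d s) = bvec (mu e d * eta s) (phi s).
Implicit Types (s t u e f : S) (a b d : D).

Local Notation el := (el mul theta E).
Local Notation er := (er mul theta E).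

Lemma bvec_inj a b s : bvec a s = bvec b s -> a = b.
Proof. by move/ffunP/(_ s); rewrite !bvecE eqxx. Qed.

Lemma gform d s : s != theta -> gamma0 (bvec d s) = bvec (mu (el s) d * eta s) (phi s).
Proof. by move=> ns; apply: hform; rewrite ?(elE hS) ?(el_mul hS). Qed.

Lemma relC s t d : mul s t != theta ->
  mu (el s) (alpha s d * xi s t) * eta (mul s t) =
  eta s * alpha (phi s) (mu (el t) d * eta t) * xi (phi s) (phi t).
Proof.
move=> nst; have ns := nz_l hS nst; have nt := nz_r hS nst.
have nph : mul (phi s) (phi t) != theta by rewrite -(phi_mul hphi) (phi_nz hS hphi).
case: hring => _ [_ [hm _]].
have := hm _ _ (inR_bvec 1 ns) (inR_bvec d nt).
rewrite (mulR_bvec hS hc) // !gform // (mulR_bvec hS hc) // (el_mulst hS nst) aut_1 ?mul1r; last first.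
  by apply: hmu; apply: (elE hS).
by rewrite -(phi_mul hphi) => /bvec_inj.
Qed.

Lemma eta_E f : f \in E -> eta f = 1.
Proof.
move=> fE; have nf := E_nz hS fE.
have nff : mul f f != theta by rewrite (E_idem hS).
have := relC 1 nff; rewrite (E_idem hS) // (el_E hS) // (xi_E hn) // (alpha_E hn) //.
have pE := phi_E hS hphi fE.
rewrite (alpha_E hn) // (xi_E hn) // !mulr1 (aut_1 (hmu fE)) mul1r.
have u := heta nf.
by rewrite -{1}(mul1r (eta f)) => /(mulIr u) ->.
Qed.

Lemma relA0 s d : s != theta ->
  mu (el s) (alpha s d) * eta s = eta s * alpha (phi s) (mu (er s) d).
Proof.
move=> ns; have fE := erE hS s.
have nsf : mul s (er s) != theta by rewrite (er_mul hS).
have := relC d nsf; rewrite (xi_er hS hc hn ns) mulr1 (er_mul hS) (eta_E fE) mulr1.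
rewrite (el_E hS fE) -(phi_er hS hphi ns) (xi_er hS hc hn); last by rewrite (phi_nz hS hphi).
by rewrite mulr1.
Qed.

Lemma relB0 s t : mul s t != theta ->
  mu (el s) (xi s t) * eta (mul s t) = eta s * alpha (phi s) (eta t) * xi (phi s) (phi t).
Proof.
move=> nst; have := relC 1 nst.
rewrite (aut_1 (alpha_aut hc (nz_l hS nst))) mul1r.
by rewrite (aut_1 (hmu (elE hS t))) mul1r.
Qed.

Definition nu e := dfinv (mu e).
Definition eta' s := nu (el s) (eta s)^-1.

Lemma mu_nu e y : e \in E -> mu e (nu e y) = y.
Proof. by move=> eE; have [_ h] := dfinvP (hmu eE); apply: h. Qed.

Lemma nu_aut e : e \in E -> isAutD (nu e).
Proof. by move=> eE; apply: dfinv_aut; apply: hmu. Qed.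

Lemma mu_eta' s : mu (el s) (eta' s) = (eta s)^-1.
Proof. by rewrite /eta' mu_nu // (elE hS). Qed.

Lemma eta'_unit s : s != theta -> eta' s \is a GRing.unit.
Proof. by move=> ns; apply: (aut_unit hD (nu_aut (elE hS s))); rewrite unitrV heta. Qed.

Lemma relA1 s d : s != theta ->
  mu (el s) (alpha s d) = eta s * alpha (phi s) (mu (er s) d) * (eta s)^-1.
Proof. by move=> ns; rewrite -relA0 // mulrK // heta. Qed.

Lemma dir1_same : same_class mul theta E alpha xi phi.
Proof.
exists nu, eta'; split.
- by move=> e eE; apply: nu_aut.
- by move=> s ns; apply: eta'_unit.
split.
- move=> s e f eE fE ns hs y.
  have [ee ff] := el_of hS ns eE fE hs; subst e f.
  apply: (aut_inj (hmu eE)); rewrite mu_nu // /rho.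
  rewrite !(aut_mul (hmu eE)) (aut_inv hD (hmu eE)) ?eta'_unit // mu_eta' invrK.
  by rewrite relA1 // mu_nu // -!mulrA mulKr ?heta // mulVr ?heta // mulr1.

- move=> s t e f g eE fE gE hs ht nst.
  have ns := nz_l hS nst; have nt := nz_r hS nst.
  have [ee ff] := el_of hS ns eE fE hs; subst e f.
  apply: (aut_inj (hmu eE)); rewrite mu_nu //.
  rewrite !(aut_mul (hmu eE)) (aut_inv hD (hmu eE)) ?eta'_unit //.
  have -> : mu (el s) (eta' (mul s t)) = (eta (mul s t))^-1.
    by rewrite -(el_mulst hS nst) mu_eta'.
  rewrite invrK mu_eta' -mulrA relB0 // relA1 // (er_el hS nst) mu_eta'.
  rewrite (er_el hS nst) in fE.
  have ap : isAutD (alpha (phi s)) by apply: (alpha_aut hc); rewrite (phi_nz hS hphi).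
  rewrite -!mulrA !mulKr ?heta // mulrA -(aut_mul ap) mulVr ?heta //.
  by rewrite (aut_1 ap) mul1r.
Qed.
End Dir1.

Section Dir2.
Variable (D : unitRingType).
Hypothesis hD : forall x : D, x != 0 -> x \is a GRing.unit.
Variables (S : finType) (mul : S -> S -> S) (theta : S) (E : {set S}).
Hypothesis hS : square_free mul theta E.
Variables (alpha : S -> D -> D) (xi : S -> S -> D).
Hypothesis hc : is_cocycle mul theta alpha xi.
Hypothesis hn : is_normal E alpha xi.
Variables (phi psi : S -> S).
Hypothesis hphi : isAutS mul phi.
Hypothesis phiK : cancel phi psi.
Hypothesis psiK : cancel psi phi.
Variables (mu : S -> D -> D) (eta : S -> D).
Hypothesis hmu : isF0 E mu.
Hypothesis heta : isF1 theta eta.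
Hypothesis hact : act_rel mul theta E mu eta alpha xi (fun s => alpha (phi s))
                            (fun s t => xi (phi s) (phi t)).
Implicit Types (s t u e f w : S) (a b d : D).

Local Notation el := (el mul theta E).
Local Notation er := (er mul theta E).

Lemma actA s y : s != theta ->
  mu (el s) (alpha (phi s) y) = rho (eta s) (alpha s (mu (er s) y)).
Proof.
move=> ns; case: hact => h _; apply: h; rewrite ?(elE hS) ?(erE hS) //.
by rewrite (el_mul hS) (er_mul hS).
Qed.

Lemma actB s t : mul s t != theta ->
  mu (el s) (xi (phi s) (phi t)) = eta s * alpha s (eta t) * xi s t * (eta (mul s t))^-1.
Proof.
move=> nst; case: hact => _ h; apply: (h s t (el s) (er s) (er t)); rewrite ?(elE hS) ?(erE hS) //.
  by rewrite (el_mul hS) (er_mul hS).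
by rewrite (er_el hS nst) (el_mul hS) (er_mul hS).
Qed.

Lemma eta_E2 e : e \in E -> eta e = 1.
Proof.
move=> eE; have ne := E_nz hS eE.
have nee : mul e e != theta by rewrite (E_idem hS).
have := actB nee; rewrite (el_E hS eE) (E_idem hS eE) (xi_E hn eE) (alpha_E hn) //.
rewrite (xi_E hn (phi_E hS hphi eE)) (aut_1 (hmu eE)) mulr1 mulrK ?heta //.
Qed.

Definition nu2 e := dfinv (mu e).
Definition eta2 s := nu2 (el s) (eta s)^-1.
Definition G (x : {ffun S -> D}) : {ffun S -> D} :=
  [ffun u => if u == theta then 0 else nu2 (el (psi u)) (x (psi u) * (eta (psi u))^-1)].

Lemma mu_nu2 e y : e \in E -> mu e (nu2 e y) = y.
Proof. by move=> eE; have [_ h] := dfinvP (hmu eE); apply: h. Qed.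
Lemma nu_mu2 e y : e \in E -> nu2 e (mu e y) = y.
Proof. by move=> eE; have [h _] := dfinvP (hmu eE); apply: h. Qed.
Lemma nu_aut2 e : e \in E -> isAutD (nu2 e).
Proof. by move=> eE; apply: dfinv_aut; apply: hmu. Qed.

Lemma phi0' : phi theta = theta. Proof. have h := phi0 hS hphi; exact h. Qed.
Lemma psi_nz u : u != theta -> psi u != theta.
Proof. by move=> nu'; rewrite -(phi_nz hS hphi) psiK. Qed.

Lemma G_bvec d s e : s != theta -> e \in E -> s = mul e s ->
  G (bvec d s) = bvec (nu2 e d * eta2 s) (phi s).
Proof.
move=> ns eE es; have ee := el_uniq hS ns eE (esym es); subst e.
have nuA := nu_aut2 eE.
apply/ffunP => u; rewrite /G ffunE !bvecE.
case: (eqVneq u theta) => [-> | nu'].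
  have nps : phi s != theta by rewrite (phi_nz hS hphi).
  by rewrite eq_sym (negbTE nps).
case: (eqVneq u (phi s)) => [-> | ne].
  by rewrite phiK eqxx (aut_mul nuA).
have -> : (psi u == s) = false.
  by apply/negbTE; apply: contra ne => /eqP <-; rewrite psiK.
by rewrite mul0r (aut_0 (nu_aut2 (elE hS _))).
Qed.

Lemma core s t x y : mul s t != theta ->
  nu2 (el s) (x * alpha s y * xi s t * (eta (mul s t))^-1) =
  nu2 (el s) (x * (eta s)^-1) * alpha (phi s) (nu2 (el t) (y * (eta t)^-1))
     * xi (phi s) (phi t).
Proof.
move=> nst; have ns := nz_l hS nst; have nt := nz_r hS nst.
have eE := elE hS s; have fE := elE hS t.
have muA := hmu eE.
apply: (aut_inj muA); rewrite mu_nu2 // !(aut_mul muA) mu_nu2 // actA // actB // /rho.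
rewrite (er_el hS nst) mu_nu2 //.
have aA := alpha_aut hc ns.
rewrite -!mulrA mulKr ?heta //.
rewrite mulKr ?heta //; congr (x * _); rewrite [RHS]mulrA -(aut_mul aA) mulrVK ?heta //.
Qed.

Lemma G_mul x y : G (mulR mul theta alpha xi x y) = mulR mul theta alpha xi (G x) (G y).
Proof.
apply/ffunP => u; rewrite /G /mulR !ffunE.
case: (eqVneq u theta) => [// | nu'].
rewrite (negbTE (psi_nz nu')).
have nuA := nu_aut2 (elE hS (psi u)).
rewrite mulr_suml (big_morph _ (aut_add nuA) (aut_0 nuA)).
rewrite [RHS](reindex_inj (phi_inj hphi)) /=; apply: eq_bigr => s _.
rewrite mulr_suml (big_morph _ (aut_add nuA) (aut_0 nuA)).
rewrite [RHS](reindex_inj (phi_inj hphi)) /=; apply: eq_bigr => t _.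

have -> : [&& phi s != theta, phi t != theta & mul (phi s) (phi t) == u] =
          [&& s != theta, t != theta & mul s t == psi u].
  by rewrite !(phi_nz hS hphi) -(phi_mul hphi) -{1}(psiK u) (inj_eq (phi_inj hphi)).
case: ifP => [/and3P [ns nt /eqP st] | _]; last by rewrite mul0r (aut_0 nuA).
have nps : phi s != theta by rewrite (phi_nz hS hphi).
have npt : phi t != theta by rewrite (phi_nz hS hphi).
rewrite !ffunE (negbTE nps) (negbTE npt) !phiK -st (el_mulst hS) ?core // st.
all: by apply: psi_nz.
Qed.

Lemma G_add x y : G (addR x y) = addR (G x) (G y).
Proof.
apply/ffunP => u; rewrite /G /addR !ffunE.
case: (eqVneq u theta) => [_ | nu']; first by rewrite addr0.
by rewrite mulrDl (aut_add (nu_aut2 (elE hS _))).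
Qed.

Lemma G_R x : inR theta (G x).
Proof. by rewrite /inR /G ffunE eqxx. Qed.

Lemma G_inj x y : inR theta x -> inR theta y -> G x = G y -> x = y.
Proof.
move=> /eqP x0 /eqP y0 /ffunP h; apply/ffunP => s.
case: (eqVneq s theta) => [-> | ns]; first by rewrite x0 y0.
have := h (phi s); rewrite /G !ffunE.
have nps : phi s != theta by rewrite (phi_nz hS hphi).
rewrite (negbTE nps) phiK => /(aut_inj (nu_aut2 (elE hS s))).
by apply: mulIr; rewrite unitrV heta.
Qed.

Lemma G_surj y : inR theta y -> exists x, inR theta x /\ G x = y.
Proof.
move=> /eqP y0.
exists [ffun s => if s == theta then 0 else mu (el s) (y (phi s)) * eta s].
split; first by rewrite /inR ffunE eqxx.
apply/ffunP => u; rewrite /G !ffunE.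
case: (eqVneq u theta) => [-> | nu']; first by rewrite y0.
rewrite (negbTE (psi_nz nu')) mulrK ?heta ?psi_nz // nu_mu2 ?(elE hS) //.
by rewrite psiK.
Qed.

Lemma G_ring : isRingAut mul theta alpha xi G.
Proof.
split; first by move=> x _; apply: G_R.
split; first by move=> x y _ _; apply: G_add.
split; first by move=> x y _ _; apply: G_mul.
split; first exact: G_inj.
exact: G_surj.
Qed.

Lemma eta2_E e : e \in E -> eta2 e = 1.
Proof.
move=> eE; rewrite /eta2 eta_E2 // invr1 (aut_1 (nu_aut2 _)) //; exact: elE.
Qed.

Lemma G_E e : e \in E -> G (bvec 1 e) = bvec 1 (phi e).
Proof.
move=> eE; rewrite (G_bvec 1 (E_nz hS eE) eE (esym (E_idem hS eE))).
by rewrite eta2_E // mulr1 (aut_1 (nu_aut2 eE)).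
Qed.

Lemma dir2 : ImPhi mul theta E alpha xi phi.
Proof.
exists G; split; first exact: G_ring.
exists G; split.
- split; first exact: G_ring.
  split.
    move=> e eE; exists (phi e); split; first by have h := phi_E hS hphi eE; exact h.
    exact: G_E.
  move=> f fE; exists (psi f).
  have npf : psi f != theta by apply: psi_nz; have h := E_nz hS fE; exact h.
  have pE : psi f \in E.
    apply: (idem_E hS npf); apply: (phi_inj hphi).
    by rewrite (phi_mul hphi) psiK (E_idem hS fE).
  by split => //; rewrite G_E // psiK.
- exists id; split => //; have h := isInner_id hS hc hn; exact h.
- exists nu2, eta2; split => //.
  + by move=> e eE; apply: nu_aut2.
  + move=> s ns; apply: (aut_unit hD (nu_aut2 (elE hS s))).
    by rewrite unitrV heta.
  + by move=> d s e ns eE es; apply: G_bvec.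
Qed.
End Dir2.

Unset Implicit Arguments.

Theorem mainTheorem6 (D : unitRingType)
  (hD : forall x : D, x != 0 -> x \is a GRing.unit)
  (S : finType) (mul : S -> S -> S) (theta : S) (E : {set S})
  (hS : square_free mul theta E)
  (alpha : S -> D -> D) (xi : S -> S -> D)
  (hc : is_cocycle mul theta alpha xi) (hn : is_normal E alpha xi)
  (phi : S -> S) :
  ImPhi mul theta E alpha xi phi <-> Stab mul theta E alpha xi phi.
Proof.
split.
- case=> gamma [_ [gamma0 [[hring _] _ [mu [eta [hmu heta hphi hform]]]]]].
  split => //.
  exact: (dir1_same hD hS hc hn hphi hring hmu heta hform).
- case=> hphi [mu [eta [hmu heta hact]]].
  have [[psi phiK psiK] _] := hphi.
  exact: (dir2 hD hS hc hn hphi phiK psiK hmu heta hact).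
Qed.
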